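(* Let $R$ be an integral domain. If $R/(u)$ is a coherent ring for every nonzero nonunit $u\in R$, then $R$ is coherent.
   Context: A commutative ring is coherent if every finitely generated ideal is finitely presented. *)

(* Defs.v *)
From HB Require Import structures.
From mathcomp Require Import all_boot all_order all_algebra ring_quotient.
From mathcomp Require Import boolp.
Set Implicit Arguments. Unset Strict Implicit. Unset Printing Implicit Defensive.
Import GRing.Theory.
Local Open Scope ring_scope.

Section Coherence.
Variable R : comNzRingType.

Definition fg_ideal (I : R -> Prop) : Prop :=
  exists (n : nat) (a : 'I_n -> R),
    forall x, I x <-> exists c : 'I_n -> R, x = \sum_(i < n) c i * a i.

Definition fp_ideal (I : R -> Prop) : Prop :=
  exists (n : nat) (a : 'I_n -> R),
    (forall x, I x <-> exists c : 'I_n -> R, x = \sum_(i < n) c i * a i) /\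
    exists (m : nat) (b : 'I_m -> 'I_n -> R),
      forall c : 'I_n -> R,
        (\sum_(i < n) c i * a i = 0) <->
        exists d : 'I_m -> R, forall i, c i = \sum_(j < m) d j * b j i.

Definition coherent : Prop := forall I : R -> Prop, fg_ideal I -> fp_ideal I.

End Coherence.

Section PrincipalIdeal.
Variable R : comUnitRingType.
Variable u : R.

(* The
   quotient library only accepts proper ideals, so when u is a unit we use
   the (irrelevant) zero ideal instead; the theorem only uses nonunits u. *)
Definition pideal : pred R := fun x =>
  if u \is a GRing.unit then x == 0 else `[< exists r : R, x = r * u >].

Lemma pideal_closed : idealr_closed pideal.
Proof.
case: (boolP (u \is a GRing.unit)) => Hu.
  split.
  - by rewrite unfold_in /pideal Hu.
  - by rewrite unfold_in /pideal Hu oner_eq0.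
  have Hu1 : GRing.unit_pred u = true := Hu.
  move=> a x y; rewrite !unfold_in Hu1 => /eqP -> /eqP ->.
  by rewrite mulr0 addr0.
have Hu' : (u \is a GRing.unit) = false by apply/negbTE.
split.
- by rewrite unfold_in /pideal Hu'; apply/asboolP; exists 0; rewrite mul0r.
- rewrite unfold_in /pideal Hu'; apply/negP => /asboolP [r Hr].
  have : u \is a GRing.unit by apply/unitrP; exists r; rewrite -Hr mulrC -Hr.
  by rewrite Hu'.
- have Hu1 : GRing.unit_pred u = false := Hu'.
  move=> a x y; rewrite !unfold_in Hu1 => /asboolP [r ->] /asboolP [s ->].
  by apply/asboolP; exists (a * r + s); rewrite mulrDl mulrA.
Qed.

HB.instance Definition _ := isIdealr.Build R pideal pideal_closed.

End PrincipalIdeal.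

Definition quot_by (R : comUnitRingType) (u : R) : comNzRingType :=
  {ideal_quot (pideal u : idealr R)}.

(* Main.v *)
Require Import Defs.
From HB Require Import structures.
From mathcomp Require Import all_boot all_order all_algebra ring_quotient.
From mathcomp Require Import generic_quotient boolp.

Import GRing.Theory.
Local Open Scope ring_scope.
Local Open Scope quotient_scope.

Lemma fchoice (T : finType) (U : Type) (P : T -> U -> Prop) :
  (forall x, exists u, P x u) -> exists f : T -> U, forall x, P x (f x).
Proof. by move=> H; have [f Hf] := fin_all_exists H; exists f. Qed.

Section Helpers.
Variable R : comNzRingType.

Lemma sum_delta n (k : 'I_n) (F : 'I_n -> R) :
  \sum_(i < n) (i == k)%:R * F i = F k.
Proof.
rewrite (bigD1 k) //= eqxx mul1r big1 ?addr0 // => i /negbTE ->.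
by rewrite mul0r.
Qed.

Lemma sum_delta_r n (k : 'I_n) (F : 'I_n -> R) :
  \sum_(i < n) (k == i)%:R * F i = F k.
Proof. by under eq_bigr do rewrite eq_sym; apply: sum_delta. Qed.

Lemma comb n m (d : 'I_m -> R) (w : 'I_m -> 'I_n -> R) (a : 'I_n -> R) :
  \sum_(i < n) (\sum_(j < m) d j * w j i) * a i =
  \sum_(j < m) d j * \sum_(i < n) w j i * a i.
Proof.
under eq_bigr do rewrite mulr_suml.
rewrite exchange_big /=; apply: eq_bigr => j _.
by rewrite mulr_sumr; apply: eq_bigr => i _; rewrite mulrA.
Qed.

Definition catv m1 m2 n (b1 : 'I_m1 -> 'I_n -> R) (b2 : 'I_m2 -> 'I_n -> R)
  : 'I_(m1 + m2) -> 'I_n -> R :=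
  fun j => match split j with inl j1 => b1 j1 | inr j2 => b2 j2 end.

Definition catd m1 m2 (d1 : 'I_m1 -> R) (d2 : 'I_m2 -> R) : 'I_(m1 + m2) -> R :=
  fun j => match split j with inl j1 => d1 j1 | inr j2 => d2 j2 end.

Arguments catv {m1 m2 n}.
Arguments catd {m1 m2}.

Lemma catE m1 m2 n (b1 : 'I_m1 -> 'I_n -> R) (b2 : 'I_m2 -> 'I_n -> R) (D : 'I_(m1 + m2) -> R) (i : 'I_n) :
  \sum_(j < m1 + m2) D j * catv b1 b2 j i =
  \sum_(j < m1) D (lshift m2 j) * b1 j i + \sum_(j < m2) D (rshift m1 j) * b2 j i.
Proof.
rewrite big_split_ord /catv; congr (_ + _); apply: eq_bigr => j _.
  by rewrite (unsplitK (inl j : 'I_m1 + 'I_m2)).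
by rewrite (unsplitK (inr j : 'I_m1 + 'I_m2)).
Qed.

Lemma ker_gen n (a : 'I_n -> R) m1 m2 (b1 : 'I_m1 -> 'I_n -> R)
    (b2 : 'I_m2 -> 'I_n -> R) :
  (forall j, \sum_(i < n) b1 j i * a i = 0) ->
  (forall j, \sum_(i < n) b2 j i * a i = 0) ->
  (forall c : 'I_n -> R, \sum_(i < n) c i * a i = 0 ->
     exists d1 d2, forall i, c i = \sum_(j < m1) d1 j * b1 j i
                                  + \sum_(j < m2) d2 j * b2 j i) ->
  forall c : 'I_n -> R, (\sum_(i < n) c i * a i = 0) <->
    exists d : 'I_(m1 + m2) -> R, forall i,
      c i = \sum_(j < m1 + m2) d j * catv b1 b2 j i.
Proof.
move=> H1 H2 H c; split.
  move=> /H [d1 [d2 Hd]]; exists (catd d1 d2) => i; rewrite catE Hd /catd.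
  congr (_ + _); apply: eq_bigr => j _.
    by rewrite (unsplitK (inl j : 'I_m1 + 'I_m2)).
  by rewrite (unsplitK (inr j : 'I_m1 + 'I_m2)).
move=> [d Hd]; under eq_bigr do rewrite Hd.
rewrite comb big1 // => j _; rewrite /catv; case: split => k.
  by rewrite H1 mulr0.
by rewrite H2 mulr0.
Qed.

Lemma fp_gens (J : R -> Prop) n (a : 'I_n -> R) :
  fp_ideal J -> (forall x, J x <-> exists c : 'I_n -> R, x = \sum_(i < n) c i * a i) ->
  exists m (b : 'I_m -> 'I_n -> R), forall c : 'I_n -> R,
    (\sum_(i < n) c i * a i = 0) <->
    exists d : 'I_m -> R, forall i, c i = \sum_(j < m) d j * b j i.
Proof.
move=> [n' [g [Hg [m' [b' Hb']]]]] Ha.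
have [e He] : exists e : 'I_n' -> 'I_n -> R, forall k, g k = \sum_(i < n) e k i * a i.
  apply: (@fchoice _ _ (fun k (e : 'I_n -> R) => g k = \sum_(i < n) e i * a i)) => k; apply/Ha; apply/Hg.
  by exists (fun i => (i == k)%:R); rewrite sum_delta.
have [f Hf] : exists f : 'I_n -> 'I_n' -> R, forall i, a i = \sum_(k < n') f i k * g k.
  apply: (@fchoice _ _ (fun i (f : 'I_n' -> R) => a i = \sum_(k < n') f k * g k)) => i; apply/Hg; apply/Ha.
  by exists (fun l => (l == i)%:R); rewrite sum_delta.
pose b1 := fun (i l : 'I_n) => (l == i)%:R - \sum_(k < n') f i k * e k l.
pose b2 := fun (k' : 'I_m') (l : 'I_n) => \sum_(k < n') b' k' k * e k l.
  exists (n + m'), (catv b1 b2); refine (@ker_gen n a n m' b1 b2 _ _ _).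
- move=> i; rewrite /b1; under eq_bigr do rewrite mulrBl.
  rewrite sumrB sum_delta comb.
  under eq_bigr do rewrite -He.
  by rewrite -Hf subrr.
- move=> k'; rewrite /b2 comb; under eq_bigr do rewrite -He.
  apply/Hb'; exists (fun j => (j == k')%:R) => i; by rewrite sum_delta.
- move=> c Hc.
  pose c' := fun k => \sum_(i < n) c i * f i k.
  have Hc' : \sum_(k < n') c' k * g k = 0.
    by rewrite /c' comb; under eq_bigr do rewrite -Hf.
  have [d' Hd'] := (proj1 (Hb' c') Hc').
  exists c, d' => l; rewrite /b1 /b2.
  under eq_bigr do rewrite mulrBr.
  rewrite sumrB.
  have -> : \sum_(i < n) c i * (l == i)%:R = c l.
    by under eq_bigr do rewrite mulrC; apply: sum_delta_r.
  have -> : \sum_(i < n) c i * (\sum_(k < n') f i k * e k l)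
           = \sum_(j < m') d' j * (\sum_(k < n') b' j k * e k l).
    rewrite -(@comb n' n c f (fun k => e k l)) /=.
    rewrite -comb; apply: eq_bigr => k _; by rewrite -Hd'.
  by rewrite subrK.
Qed.

End Helpers.
Arguments catv {R m1 m2 n}.
Arguments catd {R m1 m2}.

Section Quot.
Variable R : idomainType.
Variable u : R.
Definition piq (x : R) : quot_by u := \pi_({ideal_quot (pideal u : idealr R)}) x.
Lemma piqD x y : piq (x + y) = piq x + piq y.
Proof. rewrite /piq. exact: rmorphD. Qed.
Lemma piqB x y : piq (x - y) = piq x - piq y.
Proof. rewrite /piq. exact: rmorphB. Qed.
Lemma piqM x y : piq (x * y) = piq x * piq y.
Proof. rewrite /piq. exact: rmorphM. Qed.
Lemma piqS n (F : 'I_n -> R) : piq (\sum_(i < n) F i) = \sum_(i < n) piq (F i).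
Proof. rewrite /piq. exact: rmorph_sum. Qed.
Lemma piq0E x : (piq x == 0) = (x \in (pideal u)).
Proof. rewrite /piq -(rmorph0 (\pi_({ideal_quot (pideal u : idealr R)}))).
rewrite -Quotient.idealrBE subr0. by []. Qed.
Lemma piq_repr (y : quot_by u) : piq (repr y) = y.
Proof. exact: reprK. Qed.
Lemma piq_ker x : u \isn't a GRing.unit -> piq x = 0 -> exists r, x = r * u.
Proof.
move=> Hu /eqP; rewrite piq0E unfold_in /pideal (negbTE Hu).
by move/asboolP.
Qed.
End Quot.
Arguments piq {R} u x.
Arguments piqD {R u}.
Arguments piqB {R u}.
Arguments piqM {R u}.
Arguments piqS {R u n}.
Arguments piq0E {R u}.
Arguments piq_repr {R u}.
Arguments piq_ker {R u x}.

Theorem lemma4p4 (R : idomainType) :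
  (forall u : R, u != 0%R -> u \isn't a GRing.unit -> coherent (quot_by u)) ->
  coherent R.
Proof.
move=> Hq I [n [a Ha]].
case: (boolP [forall i, a i == 0]) => [/forallP H0 | /forallPn [i0 Hi0]].
  exists 0, (fun _ => 0); split.
    move=> x; rewrite Ha; split => -[c ->].
      exists (fun _ => 0); rewrite big_ord0 big1 // => i _.
      by rewrite (eqP (H0 i)) mulr0.
    exists (fun _ => 0); rewrite big_ord0 big1 // => i _; by rewrite mul0r.
  exists 0, (fun _ _ => 0) => c; rewrite big_ord0; split => _ //.
  by exists (fun _ => 0); case.
have Iu : I (a i0) by apply/Ha; exists (fun i => (i == i0)%:R); rewrite sum_delta.
case: (boolP (a i0 \is a GRing.unit)) => Hunit.
  exists 1, (fun _ => a i0); split.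
    move=> x; split.
      by move=> Ix; exists (fun _ => x / a i0); rewrite big_ord1 divrK.
    move=> [c ->]; rewrite big_ord1; apply/Ha; move: Iu => /Ha [c' ->].
    exists (fun i => c ord0 * c' i); rewrite mulr_sumr; apply: eq_bigr => i _.
    by rewrite mulrA.
  exists 0, (fun _ _ => 0) => c; rewrite big_ord1; split.
    move/eqP; rewrite mulf_eq0 (negbTE Hi0) orbF => /eqP Hc.
    by exists (fun _ => 0) => i; rewrite big_ord0 (ord1 i).
  by move=> [d Hd]; rewrite Hd big_ord0 mul0r.
pose u := a i0.
have Hu0 : u != 0 by [].
have Hun : u \isn't a GRing.unit by [].
pose J := fun y : quot_by u =>
  exists c : 'I_n -> quot_by u, y = \sum_(i < n) c i * piq u (a i).
have HJ : fp_ideal J.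
  by apply: (Hq u Hu0 Hun J); exists n, (fun i => piq u (a i)).
have [m [bb Hbb]] := @fp_gens _ J n (fun i => piq u (a i)) HJ (fun x => iff_refl _).
pose w := fun j i => repr (bb j i).
have Hw : forall j, piq u (\sum_(i < n) w j i * a i) = 0.
  move=> j; rewrite piqS; under eq_bigr do rewrite piqM piq_repr.
  apply/(Hbb (bb j)); exists (fun k => (k == j)%:R) => i.
  by rewrite sum_delta.
have [t Ht] : exists t : 'I_m -> R, forall j, \sum_(i < n) w j i * a i = t j * u.
  apply: (@fchoice _ _ (fun j (t : R) => \sum_(i < n) w j i * a i = t * u)) => j.
  exact: piq_ker (Hw j).
pose w' := fun j (i : 'I_n) => w j i - (i == i0)%:R * t j.
pose z := fun (k i : 'I_n) => (i == k)%:R * u - (i == i0)%:R * a k.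
have Hw' : forall j, \sum_(i < n) w' j i * a i = 0.
  move=> j; rewrite /w'; under eq_bigr do rewrite mulrBl -mulrA.
  by rewrite sumrB Ht sum_delta subrr.
exists n, a; split => //.
exists (m + n), (catv w' z); refine (@ker_gen _ n a m n w' z Hw' _ _).
  move=> k; rewrite /z; under eq_bigr do rewrite mulrBl -!mulrA.
  by rewrite sumrB !sum_delta mulrC subrr.
move=> c Hc.
have : piq u (\sum_(i < n) c i * a i) = 0 by rewrite Hc /piq rmorph0.
rewrite piqS; under eq_bigr do rewrite piqM.
move=> /(Hbb (fun i => piq u (c i))) [dd Hdd].
pose d := fun j => repr (dd j).
pose r := fun i => c i - \sum_(j < m) d j * w' j i.
have Hr0 : \sum_(i < n) r i * a i = 0.
  rewrite /r; under eq_bigr do rewrite mulrBl.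
  by rewrite sumrB Hc comb big1 ?subrr // => j _; rewrite Hw' mulr0.
have [s Hs] : exists s : 'I_n -> R, forall i, i != i0 -> r i = s i * u.
  apply: (@fchoice _ _ (fun i (s : R) => i != i0 -> r i = s * u)) => i.
  case: (eqVneq i i0) => [-> | ne]; first by exists 0; move=> /eqP.
  have : piq u (r i) = 0.
    rewrite /r piqB piqS; under eq_bigr do rewrite piqM /d /w' (negbTE ne) mul0r subr0 /w !piq_repr.
    rewrite Hdd.
    by rewrite subrr.
  by move/(piq_ker Hun) => [r' Hr']; exists r'.
exists d, s => i.
have -> : \sum_(k < n) s k * z k i = s i * u - (i == i0)%:R * \sum_(k < n) s k * a k.
  rewrite /z; under eq_bigr do rewrite mulrBr mulrCA [s _ * (_ * a _)]mulrCA.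
  by rewrite sumrB -mulr_sumr sum_delta_r.
case: (eqVneq i i0) => [-> | ne].
  have Hr' := Hr0; rewrite (bigD1 i0) //= in Hr'.
  rewrite (bigD1 i0) //= mul1r -/u.
  have E : \sum_(i < n | i != i0) r i * a i = u * \sum_(k < n | k != i0) s k * a k.
    rewrite mulr_sumr; apply: eq_bigr => k hne; rewrite Hs //.
    by rewrite -mulrA mulrCA.
  rewrite E -/u in Hr'.
  have : (r i0 + \sum_(k < n | k != i0) s k * a k) * u = 0.
    by rewrite mulrDl (mulrC (\sum_(k < n | k != i0) s k * a k)).
  move/eqP; rewrite mulf_eq0 (negbTE Hu0) orbF => /eqP H.
  have Hri0 : r i0 = - \sum_(k < n | k != i0) s k * a k.
    by apply/eqP; rewrite -subr_eq0 opprK H.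
  by rewrite opprD addNKr -Hri0 /r addrC subrK.
by rewrite mul0r subr0 -Hs // /r addrC subrK.
Qed.
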